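(* Let $p\equiv 1\bmod 4$ be a prime and let $\alpha>0$ and $0<\beta<2$ be such that \[ \bigg|\sum_{a,b\in S}\chi(a-b)\bigg|<|S|^{2-\beta}\qquad\text{for all } S\subseteq\mathbb{F}_p \text{ with } |S|>p^\alpha . \] Then for any $\tau\ge 2\alpha/(2-\beta)$ and any disjoint sets $I,J\subseteq\mathbb{F}_p$ with $|J|\le|I|\le p^{2\tau/(2-\beta)}$, we have \[ \bigg|\sum_{i\in I,\,j\in J}\chi(i-j)\bigg|\le p^\tau\sqrt{3|I||J|}. \]
   Context: $\mathbb{F}_p$ is the field with $p$ elements and $\chi:\mathbb{F}_p\to\{-1,0,1\}$ is the Legendre symbol: $\chi(0)=0$, $\chi(x)=1$ if $x$ is a nonzero square in $\mathbb{F}_p$, and $\chi(x)=-1$ otherwise. *)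

(* Defs.v *)
From mathcomp Require Import all_boot all_order all_algebra.
From Stdlib Require Import Reals.
From mathcomp Require Import Rstruct.
Set Implicit Arguments. Unset Strict Implicit. Unset Printing Implicit Defensive.

Definition legendre (p : nat) (x : 'F_p) : R :=
  if x == GRing.zero then 0%R
  else if [exists y : 'F_p, GRing.mul y y == x] then 1%R else (-1)%R.

Definition charsum (p : nat) (I J : {set 'F_p}) : R :=
  \big[Rplus/0%R]_(i in I) \big[Rplus/0%R]_(j in J) legendre (GRing.add i (GRing.opp j)).

(* Main.v *)
Require Import Defs.
From mathcomp Require Import all_boot all_order all_algebra all_field all_solvable.
From Stdlib Require Import Reals Lra Lia.
From mathcomp Require Import Rstruct.
Set Implicit Arguments. Unset Strict Implicit. Unset Printing Implicit Defensive.

Section Alg.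
Import GRing.Theory.
Local Open Scope ring_scope.

Lemma neg1_square (p : nat) : prime p -> modn p 4 = 1%nat ->
  exists w : 'F_p, w * w = -1.
Proof.
move=> pr p4.
have cardF : #|'F_p| = p by rewrite card_Fp.
set rs := enum [pred x : 'F_p | x != 0].
have p_gt1 : (1 < p)%nat by apply: prime_gt1.
have n_gt0 : (0 < p.-1)%nat by rewrite -ltnS prednK ?(ltnW p_gt1).
have : has (p.-1).-primitive_root rs.
  apply: has_prim_root => //.
  - apply/allP => x; rewrite mem_enum inE => x0.
    rewrite unity_rootE; apply/eqP.
    have := expf_card x; rewrite cardF => h.
    apply: (mulIf x0); rewrite mul1r -exprSr prednK ?h //; exact: ltnW.
  - exact: enum_uniq.
  - rewrite -cardE cardC1 cardF //.
case/hasP => z _ prim.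
set k := (p %/ 4)%nat.
have pk : p = (k * 4 + 1)%nat by rewrite {1}(divn_eq p 4) p4.
have k_gt0 : (0 < k)%nat.
  case: (posnP k) => // k0; move: pk; rewrite k0 => p1; by rewrite p1 in p_gt1.
have np : p.-1 = (4 * k)%nat by rewrite pk addn1 /= mulnC.
exists (z ^+ k).
have h2 : (z ^+ (2 * k)) ^+ 2 = 1.
  by rewrite -exprM mulnAC -np prim_expr_order.
move: h2 => /eqP; rewrite sqrf_eq1 => /orP[/eqP h|/eqP h].
  have := prim_order_dvd prim (2 * k); rewrite h eqxx np.
  move/dvdn_leq; rewrite muln_gt0 k_gt0 => /(_ isT).
  rewrite leq_pmul2r // .
by rewrite -exprD addnn -mul2n.
Qed.

Lemma legendreN (p : nat) (x : 'F_p) : prime p -> modn p 4 = 1%nat ->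
  legendre (- x) = legendre x.
Proof.
move=> pr p4; case: (neg1_square pr p4) => w hw.
rewrite /legendre oppr_eq0.
case: eqP => // _.
have -> : [exists y, y * y == - x] = [exists y, y * y == x] => //.
apply/existsP/existsP => -[y /eqP hy]; exists (w * y); apply/eqP.
  by rewrite mulrACA hw hy mulN1r opprK.
by rewrite mulrACA hw hy mulN1r.
Qed.
End Alg.

Local Open Scope R_scope.

Lemma charsum_sym (p : nat) (I J : {set 'F_p}) : prime p -> modn p 4 = 1%nat ->
  charsum J I = charsum I J.
Proof.
move=> pr p4; rewrite /charsum exchange_big /=.
apply: eq_bigr => i _; apply: eq_bigr => j _.
by rewrite -(legendreN _ pr p4) GRing.opprB.
Qed.

Lemma bigUs (T : finType) (A B : {set T}) (F : T -> R) : [disjoint A & B] ->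
  \big[Rplus/0]_(i in A :|: B) F i = \big[Rplus/0]_(i in A) F i + \big[Rplus/0]_(i in B) F i.
Proof.
move=> d; rewrite -bigU //; apply: eq_bigl => x; by rewrite !inE.
Qed.

Lemma charsum_split (p : nat) (I J : {set 'F_p}) : [disjoint I & J] ->
  charsum (I :|: J) (I :|: J) = charsum I I + charsum I J + charsum J I + charsum J J.
Proof.
move=> dIJ; rewrite /charsum bigUs //=.
rewrite (eq_bigr (fun i => \big[Rplus/0]_(j in I) legendre (GRing.add i (GRing.opp j)) +
   \big[Rplus/0]_(j in J) legendre (GRing.add i (GRing.opp j)))); last by move=> i _; rewrite bigUs.
rewrite [X in _ + X](eq_bigr (fun i => \big[Rplus/0]_(j in I) legendre (GRing.add i (GRing.opp j)) +
   \big[Rplus/0]_(j in J) legendre (GRing.add i (GRing.opp j)))); last by move=> i _; rewrite bigUs.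
rewrite !big_split /=; exact: (esym (Rplus_assoc _ _ _)).
Qed.

Lemma legendre_abs (p : nat) (x : 'F_p) : Rabs (legendre x) <= 1.
Proof.
rewrite /legendre; case: ifP => _; first by rewrite Rabs_R0; lra.
case: ifP => _; rewrite ?Rabs_R1 ?Rabs_Ropp ?Rabs_R1; lra.
Qed.

Lemma big_abs_le (T : finType) (A : {set T}) (F : T -> R) (c : R) :
  (forall i, Rabs (F i) <= c) ->
  Rabs (\big[Rplus/0]_(i in A) F i) <= INR #|A| * c.
Proof.
move=> hF.
have -> : INR #|A| * c = \big[Rplus/0]_(i in A) c.
  rewrite big_const; elim: #|A| => [|n IH]; first by rewrite /= Rmult_0_l.
  rewrite iterS -IH S_INR; ring.
apply: (big_ind2 (fun x y => Rabs x <= y)).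
- by rewrite Rabs_R0; lra.
- move=> x1 x2 y1 y2 h1 h2; apply: Rle_trans (Rabs_triang _ _) _; lra.
- by move=> i _; apply: hF.
Qed.

Lemma charsum_abs (p : nat) (I J : {set 'F_p}) :
  Rabs (charsum I J) <= INR #|I| * INR #|J|.
Proof.
apply: big_abs_le => i.
have := @big_abs_le _ J (fun j => legendre (GRing.add i (GRing.opp j))) 1 (fun j => legendre_abs _).
lra.
Qed.
Local Close Scope R_scope.


Theorem mainTheorem2 (p : nat) (alpha beta tau : R) :
  prime p -> p %% 4 = 1 ->
  (0 < alpha)%R -> (0 < beta)%R -> (beta < 2)%R ->
  (forall S : {set 'F_p},
      (Rpower (INR p) alpha < INR #|S|)%R ->
      (Rabs (charsum S S) < Rpower (INR #|S|) (2 - beta))%R) ->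
  (2 * alpha / (2 - beta) <= tau)%R ->
  forall I J : {set 'F_p},
    [disjoint I & J] ->
    #|J| <= #|I| ->
    (INR #|I| <= Rpower (INR p) (2 * tau / (2 - beta)))%R ->
    (Rabs (charsum I J) <= Rpower (INR p) tau * sqrt (3 * INR #|I| * INR #|J|))%R.
Proof.
move=> pr p4 ha hb hb2 hyp htau I J dIJ hJI hI.
Local Open Scope R_scope.
have p1 : 1 <= INR p.
  have := prime_gt1 pr => /ltP h; apply: (le_INR 1); lia.
have h2b : 0 < 2 - beta by lra.
have hq : 0 < 2 * alpha / (2 - beta) by apply: Rdiv_lt_0_compat; lra.
have tpos : 0 < tau by lra.
have ha2 : 2 * alpha <= tau * (2 - beta).
  have := Rmult_le_compat_r (2 - beta) _ _ (Rlt_le _ _ h2b) htau.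
  by rewrite /Rdiv Rmult_assoc Rinv_l ?Rmult_1_r; lra.
set T := Rpower (INR p) tau.
have T2 : T * T = Rpower (INR p) (2 * tau).
  by rewrite /T -Rpower_plus; congr Rpower; ring.
have T1 : 1 <= T.
  rewrite /T -(Rpower_O (INR p)); last lra.
  by apply: Rle_Rpower => //; lra.
set a := INR #|I|.
have key : forall (c : R) (S : {set 'F_p}), 1 <= c -> INR #|S| <= c * a ->
    Rabs (charsum S S) <= c * c * (T * T).
  move=> c S c1 hS.
  have cc1 : 1 <= c * c by nra.
  have hT : 1 <= T * T by nra.
  case: (Rlt_le_dec (Rpower (INR p) alpha) (INR #|S|)) => hs.
    have spos : 0 < INR #|S|.
      by apply: Rlt_trans hs; apply: exp_pos.
    have apos : 0 < a by nra.
    apply: Rlt_le; apply: Rlt_le_trans (hyp S hs) _.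
    apply: Rle_trans (Rle_Rpower_l (INR #|S|) (c * a) (2 - beta) _ _) _; first lra.
      split; lra.
    rewrite -Rpower_mult_distr; [|lra|lra].
    apply: Rmult_le_compat.
    - by apply: Rlt_le; apply: exp_pos.
    - by apply: Rlt_le; apply: exp_pos.
    - have -> : c * c = Rpower c (INR 2).
        by rewrite Rpower_pow /=; lra.
      apply: Rle_Rpower => //; simpl; lra.
    - rewrite T2.
      apply: Rle_trans (Rle_Rpower_l _ _ _ _ (conj apos hI)) _; first lra.
      rewrite Rpower_mult; apply: Req_le; congr Rpower; field; lra.
  apply: Rle_trans (charsum_abs S S) _.
  have s0 : 0 <= INR #|S| by apply: pos_INR.
  have : INR #|S| * INR #|S| <= Rpower (INR p) (2 * alpha).
    have -> : 2 * alpha = alpha + alpha by ring.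
    rewrite Rpower_plus; apply: Rmult_le_compat => //.
  have : Rpower (INR p) (2 * alpha) <= T * T.
    by rewrite T2; apply: Rle_Rpower => //; nra.
  move=> h1 h2.
  have : T * T <= c * c * (T * T) by nra.
  lra.
have bnd : INR #|J| <= a by apply: le_INR; apply/leP.
have hA := key 1 I (Rle_refl _) ltac:(rewrite Rmult_1_l; apply: Rle_refl).
have hB := key 1 J (Rle_refl _) ltac:(rewrite Rmult_1_l; exact: bnd).
have hC : Rabs (charsum (I :|: J) (I :|: J)) <= 2 * 2 * (T * T).
  apply: key; first lra.
  apply: Rle_trans (_ : INR (#|I| + #|J|) <= _).
    by apply: le_INR; apply/leP; rewrite cardsU leq_subr.
  rewrite plus_INR -/a; lra.
rewrite charsum_split // (charsum_sym I J pr p4) in hC.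
have hX : Rabs (charsum I J) <= 3 * (T * T).
  move: hA hB hC; set x := charsum I J; set u := charsum I I; set v := charsum J J.
  move=> hA hB hC.
  have e : 2 * x = (u + x + x + v) + - (u + v) by ring.
  have h := Rabs_triang (u + x + x + v) (- (u + v)).
  rewrite Rabs_Ropp -e Rabs_mult (Rabs_right 2) in h; last lra.
  have := Rabs_triang u v.
  lra.
have hX2 := charsum_abs I J.
have b0 : 0 <= INR #|J| by apply: pos_INR.
have a0 : 0 <= a by apply: pos_INR.
have X0 := Rabs_pos (charsum I J).
rewrite -(sqrt_square (Rabs (charsum I J))) //.
rewrite -(sqrt_square T); last lra.
rewrite -sqrt_mult_alt; last nra.
apply: sqrt_le_1_alt.
have := Rmult_le_compat _ _ _ _ X0 X0 hX hX2.
fold a; nra.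
Qed.
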